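(* Let $(G,X,\Gamma)$ be a $(\mu,\nu)$-path system group containing a $\delta$-constricting element $(g,A)$ with $\delta$-constricting map $\pi_A$, and let $\pi_{uA}$ ($u\in G$) be the translated maps described in the context. For every $\eta\ge0$ there exists $\theta\ge1$ such that for every $\eta$-quasi-convex subgroup $(H,Y)$ of $G$: (I) for every $u\in G$, if $\operatorname{diam}_{uA}(Y)>\theta$ then $uA\subseteq Y^{+\theta}$; (II) for every subgroup $K$ with $H\le K\le G$, if $[K:H]>\theta$ then there exists $k\in K$ with $\operatorname{diam}_{kA}(Y)\le\theta$.
   Context: A path is a rectifiable continuous map $\alpha\colon[a,b]\to X$ parametrised by arc length; it is a $(\kappa,\lambda)$-quasi-geodesic if $d(\alpha(t),\alpha(t'))\le|t-t'|\le\kappa d(\alpha(t),\alpha(t'))+\lambda$. A $(\mu,\nu)$-path system group $(G,X,\Gamma)$ is a group $G$ acting properly by isometries on a geodesic metric space $X$ together with a $G$-invariant collection $\Gamma$ of paths closed under subpaths, such that any two points are joined by an element of $\Gamma$ and every element is a $(\mu,\nu)$-quasi-geodesic. $Y^{+\eta}=\{x: d(x,Y)\le\eta\}$. A subset $Y$ is $\eta$-quasi-convex if every $\gamma\in\Gamma$ with endpoints in $Y$ lies in $Y^{+\eta}$; a subgroup $H$ is $\eta$-quasi-convex, written $(H,Y)$, if $Y$ is $H$-invariant, $\eta$-quasi-convex, and $H$ acts on $Y$ $\eta$-coboundedly (for all $y,y'\in Y$ some $h\in H$ has $d(y,hy')\le\eta$). A map $\pi_A\colon X\to A$ is $\delta$-constricting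 if (CS1) $d(x,\pi_A(x))\le\delta$ for $x\in A$, and (CS2) for all $x,y\in X$ and $\gamma\in\Gamma$ joining them, if $d(\pi_A(x),\pi_A(y))>\delta$ then $\gamma$ meets $B_X(\pi_A(x),\delta)$ and $B_X(\pi_A(y),\delta)$. An element $g$ is $\delta$-constricting, written $(g,A)$, if it has infinite order and $A$ is a $\langle g\rangle$-invariant subset admitting a $\delta$-constricting map $\pi_A$, on which $\langle g\rangle$ acts $\delta$-coboundedly. Translated maps: fix a set $R$ of representatives of $G/\mathrm{Stab}(A)$; for $u\in G$ let $u_0\in R$ with $uA=u_0A$ and set $\pi_{uA}(x)=u_0\pi_A(u_0^{-1}x)$ (a $\delta$-constricting map onto $uA$). $\operatorname{diam}_{uA}(Y)=\operatorname{diam}(\pi_{uA}(Y))$. *)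

(* Defs.v *)
From Stdlib Require Import Reals Lra List Sorted.
Open Scope R_scope.

Record is_group (G : Type) (mul : G -> G -> G) (inv : G -> G) (one : G) : Prop := {
  grp_assoc : forall x y z, mul x (mul y z) = mul (mul x y) z;
  grp_one_l : forall x, mul one x = x;
  grp_inv_l : forall x, mul (inv x) x = one }.

Fixpoint npow {G : Type} (mul : G -> G -> G) (one : G) (n : nat) (g : G) : G :=
  match n with O => one | S m => mul g (npow mul one m g) end.

Definition zpow {G : Type} (mul : G -> G -> G) (inv : G -> G) (one : G) (n : Z) (g : G) : G :=
  match n with
  | Z0 => one
  | Zpos p => npow mul one (Pos.to_nat p) g
  | Zneg p => inv (npow mul one (Pos.to_nat p) g)
  end.

Definition is_subgroup {G : Type} (mul : G -> G -> G) (inv : G -> G) (one : G)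
  (H : G -> Prop) : Prop :=
  H one /\ (forall x y, H x -> H y -> H (mul x y)) /\ (forall x, H x -> H (inv x)).

(* [K : H] > theta : there are more than theta pairwise distinct left cosets kH, k in K *)
Definition index_gt {G : Type} (mul : G -> G -> G) (inv : G -> G) (one : G)
  (K H : G -> Prop) (theta : R) : Prop :=
  exists l : list G, INR (length l) > theta /\ (forall k, In k l -> K k) /\
    forall i j, (i < j < length l)%nat ->
      ~ H (mul (inv (nth i l one)) (nth j l one)).

Section Metric.
Context {X : Type} (d : X -> X -> R).

Definition is_metric : Prop :=
  (forall x y, 0 <= d x y) /\ (forall x y, d x y = 0 <-> x = y) /\
  (forall x y, d x y = d y x) /\ (forall x y z, d x z <= d x y + d y z).

Definition is_geodesic_metric_space : Prop :=
  is_metric /\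
  forall x y, exists c : R -> X, c 0 = x /\ c (d x y) = y /\
    forall s t, 0 <= s <= d x y -> 0 <= t <= d x y -> d (c s) (c t) = Rabs (s - t).

Fixpoint psum (f : R -> X) (l : list R) : R :=
  match l with
  | t1 :: ((t2 :: _) as rest) => d (f t1) (f t2) + psum f rest
  | _ => 0
  end.

Definition is_partition (s t : R) (l : list R) : Prop :=
  Sorted Rle l /\ hd_error l = Some s /\ last l s = t.

Definition length_is (f : R -> X) (s t L : R) : Prop :=
  is_lub (fun r => exists l, is_partition s t l /\ r = psum f l) L.

(* f : [a,b] -> X is a rectifiable continuous path parametrised by arc length *)
Definition is_path (a b : R) (f : R -> X) : Prop :=
  a <= b /\
  (forall t, a <= t <= b -> forall eps, 0 < eps -> exists del, 0 < del /\
      forall t', a <= t' <= b -> Rabs (t - t') < del -> d (f t) (f t') < eps) /\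
  (forall s t, a <= s -> s <= t -> t <= b -> length_is f s t (t - s)).

Definition is_quasi_geodesic (kappa lambda : R) (a b : R) (f : R -> X) : Prop :=
  forall t t', a <= t <= b -> a <= t' <= b ->
    d (f t) (f t') <= Rabs (t - t') /\ Rabs (t - t') <= kappa * d (f t) (f t') + lambda.

(* Y^{+eta} = { x : d(x,Y) <= eta }, with d(x,Y) the infimum *)
Definition nbhd (Y : X -> Prop) (eta : R) (x : X) : Prop :=
  forall eps, 0 < eps -> exists y, Y y /\ d x y < eta + eps.

Definition diam_le (S : X -> Prop) (r : R) : Prop :=
  forall x y, S x -> S y -> d x y <= r.

End Metric.

Definition image {X : Type} (f : X -> X) (Y : X -> Prop) : X -> Prop :=
  fun z => exists y, Y y /\ z = f y.

Definition set_eq {X : Type} (A B : X -> Prop) : Prop := forall x, A x <-> B x.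

(* A path system is a predicate Gam a b f : "f restricted to [a,b] belongs to Gamma". *)
Section PSG.
Context {G X : Type} (mul : G -> G -> G) (inv : G -> G) (one : G)
  (act : G -> X -> X) (d : X -> X -> R) (Gam : R -> R -> (R -> X) -> Prop).

Definition translate (u : G) (A : X -> Prop) : X -> Prop :=
  fun x => exists a, A a /\ x = act u a.

Definition is_path_system_group (mu nu : R) : Prop :=
  is_group G mul inv one /\
  is_geodesic_metric_space d /\
  (forall x, act one x = x) /\
  (forall g h x, act (mul g h) x = act g (act h x)) /\
  (forall g x y, d (act g x) (act g y) = d x y) /\
  (* proper action *)
  (forall x r, exists l : list G, forall g, d x (act g x) <= r -> In g l) /\
  (forall a b f, Gam a b f -> is_path d a b f /\ is_quasi_geodesic d mu nu a b f) /\
  (forall g a b f, Gam a b f -> Gam a b (fun t => act g (f t))) /\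
  (forall a b f a' b', Gam a b f -> a <= a' -> a' <= b' -> b' <= b -> Gam a' b' f) /\
  (forall x y, exists a b f, Gam a b f /\ f a = x /\ f b = y).

Definition is_quasi_convex (Y : X -> Prop) (eta : R) : Prop :=
  forall a b f, Gam a b f -> Y (f a) -> Y (f b) ->
    forall t, a <= t <= b -> nbhd d Y eta (f t).

Definition is_qc_subgroup (H : G -> Prop) (Y : X -> Prop) (eta : R) : Prop :=
  is_subgroup mul inv one H /\
  (forall h y, H h -> Y y -> Y (act h y)) /\
  is_quasi_convex Y eta /\
  (forall y y', Y y -> Y y' -> exists h, H h /\ d y (act h y') <= eta).

(* pi : X -> A is delta-constricting (balls are closed balls) *)
Definition is_constricting_map (A : X -> Prop) (pi : X -> X) (delta : R) : Prop :=
  (forall x, A (pi x)) /\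
  (forall x, A x -> d x (pi x) <= delta) /\
  (forall x y a b f, Gam a b f -> f a = x -> f b = y -> d (pi x) (pi y) > delta ->
     (exists t, a <= t <= b /\ d (f t) (pi x) <= delta) /\
     (exists t, a <= t <= b /\ d (f t) (pi y) <= delta)).

Definition is_constricting_element (g : G) (A : X -> Prop) (pi : X -> X) (delta : R) : Prop :=
  (forall n : nat, (0 < n)%nat -> npow mul one n g <> one) /\
  (forall (n : Z) x, A x -> A (act (zpow mul inv one n g) x)) /\
  is_constricting_map A pi delta /\
  (forall a a', A a -> A a' -> exists n : Z, d a (act (zpow mul inv one n g) a') <= delta).

(* rep u = the representative u0 in R of the coset u Stab(A), i.e. u0 A = u A *)
Definition is_coset_rep (A : X -> Prop) (rep : G -> G) : Prop :=
  (forall u, set_eq (translate (rep u) A) (translate u A)) /\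
  (forall u v, set_eq (translate u A) (translate v A) -> rep u = rep v).

Definition translated_map (rep : G -> G) (pi : X -> X) (u : G) : X -> X :=
  fun x => act (rep u) (pi (act (inv (rep u)) x)).

End PSG.

(* Main.v *)
Require Import Defs.
From Stdlib Require Import Reals List ZArith Lia Lra Classical ClassicalEpsilon.
Open Scope R_scope.

Section Grp.
Context {G : Type} (mul : G -> G -> G) (inv : G -> G) (one : G).
Hypothesis Hg : is_group G mul inv one.

Lemma g_assoc x y z : mul x (mul y z) = mul (mul x y) z. Proof. apply (grp_assoc _ _ _ _ Hg). Qed.
Lemma g_1l x : mul one x = x. Proof. apply (grp_one_l _ _ _ _ Hg). Qed.
Lemma g_Vl x : mul (inv x) x = one. Proof. apply (grp_inv_l _ _ _ _ Hg). Qed.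

Lemma g_Vr x : mul x (inv x) = one.
Proof.
  rewrite <- (g_1l (mul x (inv x))).
  rewrite <- (g_Vl (inv x)) at 1.
  rewrite <- g_assoc. rewrite (g_assoc (inv x) x (inv x)), g_Vl, g_1l. apply g_Vl.
Qed.

Lemma g_1r x : mul x one = x.
Proof. rewrite <- (g_Vl x), g_assoc, g_Vr. apply g_1l. Qed.

Lemma g_cancel_l z x y : mul z x = mul z y -> x = y.
Proof. intro H. rewrite <- (g_1l x), <- (g_1l y), <- (g_Vl z), <- !g_assoc, H. reflexivity. Qed.

Lemma g_cancel_r z x y : mul x z = mul y z -> x = y.
Proof. intro H. rewrite <- (g_1r x), <- (g_1r y), <- (g_Vr z), !g_assoc, H. reflexivity. Qed.

Lemma g_inv_uniq a b : mul a b = one -> a = inv b.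
Proof. intro H. apply (g_cancel_r b). rewrite H, g_Vl. reflexivity. Qed.

Lemma g_inv_mul x y : inv (mul x y) = mul (inv y) (inv x).
Proof.
  symmetry. apply g_inv_uniq. rewrite <- g_assoc, (g_assoc (inv x) x y), g_Vl, g_1l. apply g_Vl.
Qed.

Lemma g_inv_inv x : inv (inv x) = x.
Proof. symmetry. apply g_inv_uniq. apply g_Vr. Qed.

Lemma g_inv_one : inv one = one.
Proof. symmetry. apply g_inv_uniq. apply g_1l. Qed.

Notation npw := (npow mul one).
Notation zpw := (zpow mul inv one).

Lemma npow_succ_r n x : npw (S n) x = mul (npw n x) x.
Proof.
  induction n; simpl.
  - rewrite g_1r, g_1l. reflexivity.
  - simpl in IHn. transitivity (mul x (mul (npw n x) x)). f_equal; exact IHn. apply g_assoc.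
Qed.

Lemma zpow_succ x n : zpw (Z.succ n) x = mul x (zpw n x).
Proof.
  destruct n as [|p|p].
  - simpl. reflexivity.
  - simpl. rewrite Pos.add_1_r, Pos2Nat.inj_succ. reflexivity.
  - destruct (Pos.succ_pred_or p) as [->|<-].
    + simpl. rewrite g_1r, g_Vr. reflexivity.
    + replace (Z.succ (Z.neg (Pos.succ (Pos.pred p)))) with (Z.neg (Pos.pred p)) by lia.
      simpl. rewrite Pos2Nat.inj_succ. rewrite npow_succ_r, g_inv_mul, g_assoc, g_Vr, g_1l.
      reflexivity.
Qed.

Lemma zpow_pred x n : zpw (Z.pred n) x = mul (inv x) (zpw n x).
Proof.
  rewrite <- (Z.succ_pred n) at 2. rewrite zpow_succ, g_assoc, g_Vl, g_1l. reflexivity.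
Qed.

Lemma zpow_add x a b : zpw (a + b) x = mul (zpw a x) (zpw b x).
Proof.
  induction a using Z.peano_ind.
  - simpl. rewrite g_1l. reflexivity.
  - rewrite Z.add_succ_l, !zpow_succ, IHa. apply g_assoc.
  - rewrite Z.add_pred_l, !zpow_pred, IHa. apply g_assoc.
Qed.

Lemma zpow_opp x a : zpw (- a) x = inv (zpw a x).
Proof. apply g_inv_uniq. rewrite <- zpow_add. replace (-a + a)%Z with 0%Z by lia. reflexivity. Qed.

Lemma zpow_comm x a b : mul (zpw a x) (zpw b x) = mul (zpw b x) (zpw a x).
Proof. rewrite <- !zpow_add, Z.add_comm. reflexivity. Qed.

Lemma zpow_mul x m q : zpw (m * q) x = zpw q (zpw m x).
Proof.
  induction q using Z.peano_ind.
  - rewrite Z.mul_0_r. reflexivity.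
  - rewrite Z.mul_succ_r, zpow_add, zpow_comm, IHq, zpow_succ. reflexivity.
  - replace (m * Z.pred q)%Z with (m * q + - m)%Z by lia.
    rewrite zpow_add, zpow_comm, IHq, zpow_pred, zpow_opp. reflexivity.
Qed.

Lemma zpow_inj x (Hx : forall n : nat, (0 < n)%nat -> npw n x <> one) a b :
  zpw a x = zpw b x -> a = b.
Proof.
  intro H.
  assert (E : zpw (a - b) x = one).
  { replace (a - b)%Z with (a + - b)%Z by lia. rewrite zpow_add, zpow_opp, H. apply g_Vr. }
  destruct (a - b)%Z eqn:Ed.
  - lia.
  - exfalso. simpl in E. apply (Hx (Pos.to_nat p)); auto. lia.
  - exfalso. simpl in E. apply (Hx (Pos.to_nat p)). lia.
    rewrite <- (g_inv_inv (npw _ x)), E. apply g_inv_one.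
Qed.

Lemma subgroup_zpow (H : G -> Prop) h :
  is_subgroup mul inv one H -> H h -> forall q, H (zpw q h).
Proof.
  intros [H1 [HM HI]] Hh q. induction q using Z.peano_ind.
  - exact H1.
  - rewrite zpow_succ. auto.
  - rewrite zpow_pred. auto.
Qed.

End Grp.

Lemma pigeon {T : Type} (phi : nat -> T) (n : nat) (F : list T) :
  (forall i, (i < n)%nat -> In (phi i) F) -> (length F < n)%nat ->
  exists i j, (i < j < n)%nat /\ phi i = phi j.
Proof.
  intros HF Hlen. apply NNPP. intro Hno.
  assert (ND : NoDup (map phi (seq 0 n))).
  { apply (NoDup_nth _ (phi 0%nat)). rewrite length_map, length_seq. intros i j Hi Hj E.
    rewrite (map_nth phi (seq 0 n) 0%nat i) in E. rewrite (map_nth phi (seq 0 n) 0%nat j) in E.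
    rewrite !seq_nth in E by lia. simpl in E.
    destruct (Nat.lt_trichotomy i j) as [h|[h|h]]; auto; exfalso; apply Hno.
    - exists i, j. split; [lia|exact E].
    - exists j, i. split; [lia|symmetry; exact E]. }
  assert (INC : incl (map phi (seq 0 n)) F).
  { intros x Hx. apply in_map_iff in Hx. destruct Hx as [i [<- Hi]]. apply in_seq in Hi. apply HF. lia. }
  pose proof (NoDup_incl_length ND INC). rewrite length_map, length_seq in H. lia.
Qed.

Section Geo.
Context {G X : Type} (mul : G -> G -> G) (inv : G -> G) (one : G)
  (act : G -> X -> X) (d : X -> X -> R) (Gam : R -> R -> (R -> X) -> Prop)
  (mu nu delta : R) (g : G) (A : X -> Prop) (piA : X -> X).
Hypothesis HP : is_path_system_group mul inv one act d Gam mu nu.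
Hypothesis HC : is_constricting_element mul inv one act d Gam g A piA delta.

Notation zp n := (zpow mul inv one n g).

Lemma Hgrp : is_group G mul inv one. Proof. apply HP. Qed.
Lemma d_nn x y : 0 <= d x y. Proof. apply HP. Qed.
Lemma d_zero x y : d x y = 0 <-> x = y. Proof. apply HP. Qed.
Lemma d_sym x y : d x y = d y x. Proof. apply HP. Qed.
Lemma d_tri x y z : d x z <= d x y + d y z. Proof. apply HP. Qed.
Lemma d_refl x : d x x = 0. Proof. apply d_zero. reflexivity. Qed.
Lemma act_one x : act one x = x. Proof. apply HP. Qed.
Lemma act_mul u v x : act (mul u v) x = act u (act v x). Proof. apply HP. Qed.
Lemma act_iso u x y : d (act u x) (act u y) = d x y. Proof. apply HP. Qed.
Lemma proper x r : exists l : list G, forall h, d x (act h x) <= r -> In h l. Proof. apply HP. Qed.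
Lemma gam_pq a b f : Gam a b f -> is_path d a b f /\ is_quasi_geodesic d mu nu a b f. Proof. apply HP. Qed.
Lemma gam_act u a b f : Gam a b f -> Gam a b (fun t => act u (f t)). Proof. apply HP. Qed.
Lemma joined x y : exists a b f, Gam a b f /\ f a = x /\ f b = y. Proof. apply HP. Qed.

Lemma act_inv_l u x : act (inv u) (act u x) = x.
Proof. rewrite <- act_mul, (g_Vl _ _ _ Hgrp). apply act_one. Qed.
Lemma act_inv_r u x : act u (act (inv u) x) = x.
Proof. rewrite <- act_mul, (g_Vr _ _ _ Hgrp). apply act_one. Qed.

Lemma g_ord n : (0 < n)%nat -> npow mul one n g <> one. Proof. apply HC. Qed.
Lemma A_inv n x : A x -> A (act (zp n) x). Proof. apply HC. Qed.
Lemma pi_A x : A (piA x). Proof. apply HC. Qed.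
Lemma CS1 x : A x -> d x (piA x) <= delta. Proof. apply HC. Qed.
Lemma CS2 x y a b f : Gam a b f -> f a = x -> f b = y -> d (piA x) (piA y) > delta ->
     (exists t, a <= t <= b /\ d (f t) (piA x) <= delta) /\
     (exists t, a <= t <= b /\ d (f t) (piA y) <= delta).
Proof. apply HC. Qed.
Lemma A_cob a a' : A a -> A a' -> exists n : Z, d a (act (zp n) a') <= delta. Proof. apply HC. Qed.

Lemma act_zp_comm m n x : act (zp m) (act (zp n) x) = act (zp n) (act (zp m) x).
Proof. rewrite <- !act_mul, (zpow_comm _ _ _ Hgrp). reflexivity. Qed.

Lemma delta_nn (x0 : X) : 0 <= delta.
Proof. pose proof (CS1 _ (pi_A x0)). pose proof (d_nn (piA x0) (piA (piA x0))). lra. Qed.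

Definition Lip (D0 : R) := 3 * delta + Rabs mu * D0 + Rabs nu.

Lemma coarse_lip (x0 : X) x x' D0 : d x x' <= D0 -> d (piA x) (piA x') <= Lip D0.
Proof.
  intro HD. pose proof (delta_nn x0) as Hd. pose proof (d_nn x x') as Hxx.
  unfold Lip.
  assert (0 <= Rabs mu * D0) by (apply Rmult_le_pos; [apply Rabs_pos| lra]).
  pose proof (Rabs_pos nu).
  destruct (Rle_dec (d (piA x) (piA x')) delta) as [h|h]. lra.
  destruct (joined x x') as [a [b [f [Hf [Ha Hb]]]]].
  destruct (CS2 _ _ _ _ _ Hf Ha Hb) as [[t [Ht Dt]] [t' [Ht' Dt']]]. lra.
  destruct (gam_pq _ _ _ Hf) as [Hpath Hq].
  assert (Hab : a <= b) by apply Hpath.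
  destruct (Hq t t' Ht Ht') as [Q1 _].
  destruct (Hq a b ltac:(lra) ltac:(lra)) as [_ Q2].
  rewrite Ha, Hb in Q2.
  assert (Rabs (t - t') <= b - a) by (apply Rabs_le; lra).
  assert (Rabs (a - b) = b - a) by (rewrite Rabs_minus_sym; apply Rabs_right; lra).
  assert (mu * d x x' <= Rabs mu * D0).
  { apply Rle_trans with (Rabs mu * d x x').
    - apply Rmult_le_compat_r; [lra| apply Rle_abs].
    - apply Rmult_le_compat_l; [apply Rabs_pos| lra]. }
  pose proof (Rle_abs nu).
  pose proof (d_tri (piA x) (f t) (piA x')). pose proof (d_tri (f t) (f t') (piA x')).
  rewrite d_sym in Dt. lra.
Qed.

Lemma ivt (c : nat -> X) L s : 0 <= s -> (forall k, d (c k) (c (S k)) <= L) ->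
  forall n, s <= d (c 0%nat) (c n) -> exists k, s <= d (c 0%nat) (c k) <= s + L.
Proof.
  intros Hs Hstep n. induction n as [|n IH]; intro Hn.
  - exists 0%nat. rewrite d_refl in *. pose proof (Hstep 0%nat). pose proof (d_nn (c 0%nat) (c 1%nat)). lra.
  - destruct (Rle_dec s (d (c 0%nat) (c n))) as [h|h]. apply IH; exact h.
    exists (S n). pose proof (Hstep n). pose proof (d_tri (c 0%nat) (c n) (c (S n))). lra.
Qed.

Lemma nearY eta H Y : is_qc_subgroup mul inv one act d Gam H Y eta ->
  forall y1 y2, Y y1 -> Y y2 -> d (piA y1) (piA y2) > 2 * delta ->
  forall z, Y z -> exists y, Y y /\ d (piA z) y < delta + eta + 1.
Proof.
  intros [Hsub [Hinvar [Hqc Hcob]]] y1 y2 Y1 Y2 Hd z Yz.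
  assert (exists w, Y w /\ d (piA z) (piA w) > delta) as [w [Yw Hw]].
  { destruct (Rlt_dec delta (d (piA z) (piA y1))) as [h|h]. exists y1; auto.
    exists y2. split; auto. pose proof (d_tri (piA y1) (piA z) (piA y2)) as T. rewrite (d_sym (piA y1) (piA z)) in T. apply Rnot_lt_le in h. lra. }
  destruct (joined z w) as [a [b [f [Hf [Ha Hb]]]]].
  destruct (CS2 _ _ _ _ _ Hf Ha Hb Hw) as [[t [Ht Dt]] _].
  assert (Hn : nbhd d Y eta (f t)) by (apply (Hqc a b f Hf); [rewrite Ha|rewrite Hb|]; auto).
  destruct (Hn 1 ltac:(lra)) as [y [Yy Dy]]. exists y. split; auto.
  pose proof (d_tri (piA z) (f t) y). rewrite d_sym in Dt. lra.
Qed.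

Lemma rmin_step a b k : a <= b -> Rabs (Rmin (a + INR k) b - Rmin (a + INR (S k)) b) <= 1.
Proof.
  intro Hab. rewrite S_INR. pose proof (pos_INR k). unfold Rmin.
  destruct (Rle_dec (a + INR k) b); destruct (Rle_dec (a + (INR k + 1)) b); apply Rabs_le; lra.
Qed.

Lemma chain eta H Y : is_qc_subgroup mul inv one act d Gam H Y eta ->
  forall y1 y2, Y y1 -> Y y2 ->
  exists c : nat -> X, (forall k, exists z, Y z /\ c k = piA z) /\
    (forall k, d (c k) (c (S k)) <= Lip (2 * eta + 3)) /\
    d (c 0%nat) (piA y1) <= Lip (eta + 1) /\
    exists K, d (c K) (piA y2) <= Lip (eta + 1).
Proof.
  intros HY y1 y2 Y1 Y2. destruct HY as [Hsub [Hinvar [Hqc Hcob]]].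
  destruct (joined y1 y2) as [a [b [f [Hf [Ha Hb]]]]].
  destruct (gam_pq _ _ _ Hf) as [Hpath Hq].
  assert (Hab : a <= b) by apply Hpath.
  set (tk := fun k => Rmin (a + INR k) b).
  assert (Htk : forall k, a <= tk k <= b).
  { intro k. unfold tk. pose proof (pos_INR k). split. apply Rmin_glb; lra. apply Rmin_r. }
  set (P := fun k z => Y z /\ d (f (tk k)) z < eta + 1).
  assert (HE : forall k, exists z, P k z).
  { intro k. assert (Hn : nbhd d Y eta (f (tk k))) by (apply (Hqc a b f Hf); [rewrite Ha|rewrite Hb|]; auto).
    destruct (Hn 1 ltac:(lra)) as [y [Yy Dy]]. exists y. split; auto. }
  set (zf := fun k => epsilon (inhabits y1) (P k)).
  assert (Hz : forall k, P k (zf k)) by (intro k; apply epsilon_spec, HE).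
  exists (fun k => piA (zf k)). split; [|split; [|split]].
  - intro k. exists (zf k). split; auto. apply Hz.
  - intro k. apply (coarse_lip y1).
    destruct (Hz k) as [_ D1]. destruct (Hz (S k)) as [_ D2].
    destruct (Hq (tk k) (tk (S k)) (Htk k) (Htk (S k))) as [Q _].
    pose proof (rmin_step a b k Hab).
    pose proof (d_tri (zf k) (f (tk k)) (zf (S k))). pose proof (d_tri (f (tk k)) (f (tk (S k))) (zf (S k))).
    rewrite d_sym in D1. unfold tk in *. lra.
  - apply (coarse_lip y1). destruct (Hz 0%nat) as [_ D1].
    assert (tk 0%nat = a) by (unfold tk; simpl; rewrite Rplus_0_r; apply Rmin_left; lra).
    rewrite H0, Ha in D1. rewrite d_sym. lra.
  - destruct (INR_unbounded (b - a)) as [K HK]. exists K.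
    apply (coarse_lip y1). destruct (Hz K) as [_ D1].
    assert (tk K = b) by (unfold tk; apply Rmin_right; lra).
    rewrite H0, Hb in D1. rewrite d_sym. lra.
Qed.

Lemma bnd_int (F : list G) : exists M : Z, (0 <= M)%Z /\ forall n, In (zp n) F -> (Z.abs n <= M)%Z.
Proof.
  induction F as [|f F IH].
  - exists 0%Z. split. lia. intros n [].
  - destruct IH as [M [HM IH]].
    destruct (classic (exists n0, zp n0 = f)) as [[n0 Hn0]|Hno].
    + exists (Z.max M (Z.abs n0)). split. lia. intros n [E|E].
      * rewrite <- Hn0 in E. apply (zpow_inj _ _ _ Hgrp) in E. subst. lia.
        intros; apply g_ord; auto.
      * specialize (IH n E). lia.
    + exists M. split; auto. intros n [E|E]. exfalso; apply Hno; eauto. auto.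
Qed.

Lemma bnd_dist (a0 : X) (M : nat) : exists B, 0 <= B /\
  forall r : Z, (Z.abs r <= Z.of_nat M)%Z -> d a0 (act (zp r) a0) <= B.
Proof.
  induction M as [|M IH].
  - exists 0. split. lra. intros r Hr. assert (r = 0%Z) by lia. subst. simpl. rewrite act_one, d_refl. lra.
  - destruct IH as [B [HB IH]].
    exists (Rmax B (Rmax (d a0 (act (zp (Z.of_nat (S M))) a0)) (d a0 (act (zp (- Z.of_nat (S M))) a0)))).
    split. apply Rle_trans with B; auto. apply Rmax_l.
    intros r Hr.
    destruct (Z_le_gt_dec (Z.abs r) (Z.of_nat M)) as [h|h].
    + apply Rle_trans with B; auto. apply Rmax_l.
    + assert (r = Z.of_nat (S M) \/ r = (- Z.of_nat (S M))%Z) as [->| ->] by lia.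
      * eapply Rle_trans; [|apply Rmax_r]. apply Rmax_l.
      * eapply Rle_trans; [|apply Rmax_r]. apply Rmax_r.
Qed.

Lemma Lip_nn (x0 : X) D0 : 0 <= D0 -> 0 <= Lip D0.
Proof.
  intro h. pose proof (delta_nn x0). unfold Lip.
  assert (0 <= Rabs mu * D0) by (apply Rmult_le_pos; [apply Rabs_pos| lra]).
  pose proof (Rabs_pos nu). lra.
Qed.

Lemma d_inv_shift u x y : d x (act (inv u) y) = d (act u x) y.
Proof. rewrite <- (act_iso u x), act_inv_r. reflexivity. Qed.

Lemma core (x0 : X) eta : 0 <= eta -> exists th, 1 <= th /\
  forall H Y, is_qc_subgroup mul inv one act d Gam H Y eta ->
  forall y1 y2, Y y1 -> Y y2 -> d (piA y1) (piA y2) > th ->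
  forall a, A a -> nbhd d Y th a.
Proof.
  intros Heta.
  pose proof (delta_nn x0) as Hd.
  set (astar := piA x0). assert (Hastar : A astar) by apply pi_A.
  set (C0 := delta + eta + 1).
  set (L := Lip (2 * eta + 3)).
  assert (HL : 0 <= L) by (apply (Lip_nn x0); lra).
  set (SS := L + 2 * delta + 1).
  set (r1 := 3 * delta + 2 * C0 + eta).
  destruct (proper astar r1) as [F1 HF1].
  set (N := length F1).
  set (D := INR N * SS + L).
  destruct (proper astar (D + 3 * delta)) as [F2 HF2].
  destruct (bnd_int F2) as [M [HM HMF]].
  destruct (bnd_dist astar (Z.to_nat (2 * M))) as [B [HB HBd]].
  assert (HNS : 0 <= INR N * SS) by (apply Rmult_le_pos; [apply pos_INR| unfold SS; lra]).
  assert (HL1 : 0 <= Lip (eta + 1)) by (apply (Lip_nn x0); lra).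
  exists (1 + 2 * delta + INR N * SS + 2 * Lip (eta + 1) + 3 * delta + B + C0).
  split. unfold C0; lra.
  intros H Y HY y1 y2 Y1 Y2 Hfar a Ha.
  pose proof HY as [Hsub [Hinvar [Hqc Hcob]]].
  assert (Hfar2 : d (piA y1) (piA y2) > 2 * delta) by (unfold C0 in Hfar; lra).
  pose proof (nearY eta H Y HY y1 y2 Y1 Y2 Hfar2) as NearY.
  destruct (chain eta H Y HY y1 y2 Y1 Y2) as [c [Hcz [Hcs [Hc0 [K HcK]]]]].
  fold L in Hcs.
  set (p := c 0%nat).
  destruct (Hcz 0%nat) as [z0 [Yz0 Ez0]].
  assert (Hp : A p) by (unfold p; rewrite Ez0; apply pi_A).
  destruct (NearY z0 Yz0) as [y0 [Yy0 Dy0]]. rewrite <- Ez0 in Dy0. fold p in Dy0. fold C0 in Dy0.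
  destruct (A_cob p astar Hp Hastar) as [k Hk].
  set (q := act (zp k) astar). fold q in Hk.
  assert (HpK : INR N * SS <= d p (c K)).
  { pose proof (d_tri (piA y1) p (piA y2)) as T1. pose proof (d_tri p (c K) (piA y2)) as T2.
    unfold p in *. rewrite (d_sym (piA y1) (c 0%nat)) in T1. unfold C0 in Hfar. lra. }
  set (PK := fun j k => INR j * SS <= d p (c k) <= INR j * SS + L).
  assert (HEK : forall j, (j <= N)%nat -> exists k, PK j k).
  { intros j Hj. apply (ivt c L (INR j * SS)) with (n := K).
    apply Rmult_le_pos; [apply pos_INR| unfold SS; lra]. exact Hcs.
    apply Rle_trans with (INR N * SS); [|exact HpK].
    apply Rmult_le_compat_r; [unfold SS; lra| apply le_INR; exact Hj]. }
  set (kf := fun j => epsilon (inhabits 0%nat) (PK j)).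
  assert (Hkf : forall j, (j <= N)%nat -> PK j (kf j)) by (intros j Hj; apply epsilon_spec, HEK, Hj).
  set (aj := fun j => c (kf j)).
  set (e := fun (h : G) (n : Z) => mul (inv (zp k)) (mul h (mul (inv (zp n)) (zp k)))).
  set (Q := fun j (pr : G * Z) => H (fst pr) /\ d p (act (zp (snd pr)) (aj j)) <= delta /\
              In (e (fst pr) (snd pr)) F1).
  assert (HEQ : forall j, (j <= N)%nat -> exists pr, Q j pr).
  { intros j Hj. destruct (Hcz (kf j)) as [zj [Yzj Ezj]].
    assert (Aj : A (aj j)) by (unfold aj; rewrite Ezj; apply pi_A).
    destruct (NearY zj Yzj) as [yj [Yyj Dyj]]. rewrite <- Ezj in Dyj. fold C0 in Dyj.
    destruct (Hcob y0 yj Yy0 Yyj) as [h [Hh Dh]].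
    destruct (A_cob p (aj j) Hp Aj) as [n Hn].
    exists (h, n). split; [exact Hh|split; [exact Hn|]]. simpl. apply HF1.
    unfold e. rewrite !act_mul, d_inv_shift. fold q.
    rewrite d_sym, <- d_inv_shift in Hn.
    set (W := act h (act (inv (zp n)) q)).
    pose proof (d_tri q p W) as T1.
    pose proof (d_tri p y0 W) as T2.
    pose proof (d_tri y0 (act h yj) W) as T3.
    pose proof (d_tri (act h yj) (act h (aj j)) W) as T4.
    pose proof (d_tri (act h (aj j)) (act h (act (inv (zp n)) p)) W) as T5.
    unfold W in T4, T5. rewrite !act_iso in T4, T5.
    assert (Dyj2 : d yj (aj j) < C0) by (rewrite d_sym; exact Dyj). pose proof (d_sym q p).
    unfold W in *. unfold r1. rewrite (act_iso h yj) in T3. rewrite (act_iso (inv (zp n)) p q) in T5. lra. }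
  set (pf := fun j => epsilon (inhabits (one, 0%Z)) (Q j)).
  assert (Hpf : forall j, (j <= N)%nat -> Q j (pf j)) by (intros j Hj; apply epsilon_spec, HEQ, Hj).
  destruct (pigeon (fun j => e (fst (pf j)) (snd (pf j))) (S N) F1) as [i [j [Hij Eij]]].
  { intros i Hi. apply Hpf. lia. }
  { unfold N. lia. }
  destruct (Hpf i ltac:(lia)) as [Hhi [Dni _]].
  destruct (Hpf j ltac:(lia)) as [Hhj [Dnj _]].
  destruct (pf i) as [hi ni]. destruct (pf j) as [hj nj]. cbn [fst snd] in *.
  destruct (Hkf i ltac:(lia)) as [Ki1 Ki2]. destruct (Hkf j ltac:(lia)) as [Kj1 Kj2].
  fold (aj i) in Ki1, Ki2. fold (aj j) in Kj1, Kj2.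
  pose proof Hgrp as HG.
  assert (E1 : mul hi (inv (zp ni)) = mul hj (inv (zp nj))).
  { unfold e in Eij. apply (g_cancel_l _ _ _ HG) in Eij.
    rewrite !(g_assoc _ _ _ HG) in Eij. apply (g_cancel_r _ _ _ HG) in Eij. exact Eij. }
  set (m := (- nj + ni)%Z).
  assert (Em : mul (inv hj) hi = zp m).
  { unfold m. rewrite (zpow_add _ _ _ HG). apply (g_cancel_r _ _ _ HG (inv (zp ni))).
    rewrite <- !(g_assoc _ _ _ HG), E1, (g_assoc _ _ _ HG), (g_Vl _ _ _ HG), (g_1l _ _ _ HG).
    rewrite (g_Vr _ _ _ HG), (g_1r _ _ _ HG), (zpow_opp _ _ _ HG). reflexivity. }
  assert (Hm : H (zp m)).
  { rewrite <- Em. destruct Hsub as [_ [HSm HSi]]. apply HSm; auto. }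
  assert (Hm0 : m <> 0%Z).
  { intro Z0. assert (ni = nj) by (unfold m in Z0; lia). subst nj.
    assert (d (aj i) (aj j) <= 2 * delta).
    { rewrite <- (act_iso (zp ni)). pose proof (d_tri (act (zp ni) (aj i)) p (act (zp ni) (aj j))).
      rewrite d_sym in Dni. lra. }
    pose proof (d_tri p (aj i) (aj j)).
    assert (INR i + 1 <= INR j) by (rewrite <- S_INR; apply le_INR; lia).
    assert (0 <= (INR j - INR i - 1) * SS) by (apply Rmult_le_pos; [lra| unfold SS; lra]).
    unfold SS in *. nra. }
  assert (Hbn : forall l n, (l <= N)%nat -> PK l (kf l) -> d p (act (zp n) (aj l)) <= delta -> (Z.abs n <= M)%Z).
  { intros l n Hl [P1 P2] Dn. apply HMF, HF2.
    rewrite <- (act_iso (zp k)), act_zp_comm. fold q.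
    pose proof (d_tri q p (act (zp n) q)) as T1.
    pose proof (d_tri p (act (zp n) (aj l)) (act (zp n) q)) as T2.
    pose proof (d_tri (act (zp n) (aj l)) (act (zp n) p) (act (zp n) q)) as T3.
    rewrite (act_iso (zp n) (aj l) q) in T2, T3. rewrite (act_iso (zp n) (aj l) p), (act_iso (zp n) p q) in T3. fold (aj l) in P1, P2.
    assert (INR l * SS <= INR N * SS) by (apply Rmult_le_compat_r; [unfold SS; lra| apply le_INR; lia]).
    pose proof (d_sym (aj l) p). pose proof (d_sym q p). unfold D. lra. }
  pose proof (Hbn i ni ltac:(lia) (Hkf i ltac:(lia)) Dni) as Bi.
  pose proof (Hbn j nj ltac:(lia) (Hkf j ltac:(lia)) Dnj) as Bj.
  destruct (A_cob a p Ha Hp) as [n Hn].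
  pose proof (Z.quot_rem' n m) as En.
  pose proof (Z.rem_bound_abs n m Hm0) as Hr.
  set (qq := Z.quot n m) in *. set (r := Z.rem n m) in *.
  assert (HY0 : Y (act (zp (m * qq)) y0)).
  { apply Hinvar; auto. rewrite (zpow_mul _ _ _ HG). apply (subgroup_zpow _ _ _ HG); auto. }
  intros eps Heps. exists (act (zp (m * qq)) y0). split; auto.
  rewrite En, (zpow_add _ _ _ HG), act_mul in Hn.
  assert (Hrb : d astar (act (zp r) astar) <= B).
  { apply HBd. assert (Z.abs m <= 2 * M)%Z by (unfold m; lia). clearbody r. rewrite Z2Nat.id by lia. lia. }
  pose proof (d_tri a (act (zp (m * qq)) (act (zp r) p)) (act (zp (m * qq)) y0)) as T1.
  pose proof (d_tri (act (zp (m * qq)) (act (zp r) p)) (act (zp (m * qq)) p) (act (zp (m * qq)) y0)) as T2.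
  rewrite !act_iso in T2.
  pose proof (d_tri (act (zp r) p) (act (zp r) q) p) as T3.
  pose proof (d_tri (act (zp r) q) q p) as T4.
  rewrite act_iso in T3.
  assert (Hqr : d (act (zp r) q) q = d (act (zp r) astar) astar).
  { unfold q. rewrite act_zp_comm, act_iso. reflexivity. }
  rewrite (d_sym (act (zp r) astar)) in Hqr. pose proof (d_sym q p).

  rewrite (act_iso (zp (m * qq))) in T1. lra.
Qed.

End Geo.

Section Main.
Context {G X : Type} (mul : G -> G -> G) (inv : G -> G) (one : G)
  (act : G -> X -> X) (d : X -> X -> R) (Gam : R -> R -> (R -> X) -> Prop)
  (mu nu delta : R) (g : G) (A : X -> Prop) (piA : X -> X) (rep : G -> G).
Hypothesis HP : is_path_system_group mul inv one act d Gam mu nu.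
Hypothesis HC : is_constricting_element mul inv one act d Gam g A piA delta.
Hypothesis HR : is_coset_rep act A rep.

Lemma transport eta H Y u0 : is_qc_subgroup mul inv one act d Gam H Y eta ->
  is_qc_subgroup mul inv one act d Gam (fun h => H (mul u0 (mul h (inv u0)))) (fun x => Y (act u0 x)) eta.
Proof.
  pose proof (Hgrp _ _ _ _ _ _ _ _ HP) as HG.
  intros [[H1 [HM HI]] [Hinvar [Hqc Hcob]]].
  set (cj := fun h => mul u0 (mul h (inv u0))).
  assert (cj_mul : forall x y, cj (mul x y) = mul (cj x) (cj y)).
  { intros x y. unfold cj. rewrite <- !(g_assoc _ _ _ HG). f_equal. f_equal.
    rewrite (g_assoc _ _ _ HG (inv u0)), (g_Vl _ _ _ HG), (g_1l _ _ _ HG). reflexivity. }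
  assert (cj_inv : forall x, cj (inv x) = inv (cj x)).
  { intros x. unfold cj. rewrite !(g_inv_mul _ _ _ HG), (g_inv_inv _ _ _ HG), (g_assoc _ _ _ HG). reflexivity. }
  assert (cj_act : forall h y, act u0 (act h y) = act (cj h) (act u0 y)).
  { intros h y. unfold cj. rewrite <- !(act_mul _ _ _ _ _ _ _ _ HP), <- !(g_assoc _ _ _ HG), (g_Vl _ _ _ HG), (g_1r _ _ _ HG). reflexivity. }
  split; [split; [|split]|split; [|split]].
  - change (H (cj one)). unfold cj. rewrite (g_1l _ _ _ HG), (g_Vr _ _ _ HG). exact H1.
  - intros x y Hx Hy. change (H (cj (mul x y))). rewrite cj_mul. apply HM; auto.
  - intros x Hx. change (H (cj (inv x))). rewrite cj_inv. apply HI; auto.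
  - intros h y Hh Hy. simpl. rewrite cj_act. apply Hinvar; auto.
  - intros a b f Hf Ya Yb t Ht eps Heps.
    pose proof (gam_act _ _ _ _ _ _ _ _ HP u0 a b f Hf) as Hf'.
    destruct (Hqc a b _ Hf' Ya Yb t Ht eps Heps) as [y [Yy Dy]].
    exists (act (inv u0) y). split.
    + rewrite (act_inv_r _ _ _ _ _ _ _ _ HP). exact Yy.
    + rewrite (d_inv_shift _ _ _ _ _ _ _ _ HP). exact Dy.
  - intros y y' Yy Yy'. destruct (Hcob _ _ Yy Yy') as [h [Hh Dh]].
    exists (mul (inv u0) (mul h u0)). split.
    + assert (E : mul u0 (mul (mul (inv u0) (mul h u0)) (inv u0)) = h).
      { rewrite !(g_assoc _ _ _ HG), (g_Vr _ _ _ HG), (g_1l _ _ _ HG), <- (g_assoc _ _ _ HG),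
          (g_Vr _ _ _ HG), (g_1r _ _ _ HG). reflexivity. }
      rewrite E. exact Hh.
    + rewrite <- (act_iso _ _ _ _ _ _ _ _ HP u0), <- (act_mul _ _ _ _ _ _ _ _ HP u0),
        (g_assoc _ _ _ HG), (g_Vr _ _ _ HG), (g_1l _ _ _ HG), (act_mul _ _ _ _ _ _ _ _ HP). exact Dh.
Qed.

Lemma partI (x0 : X) eta : 0 <= eta -> exists th, 1 <= th /\
  forall H Y, is_qc_subgroup mul inv one act d Gam H Y eta ->
  forall u : G,
    ~ diam_le d (image (translated_map inv act rep piA u) Y) th ->
    forall x, translate act u A x -> nbhd d Y th x.
Proof.
  intros Heta. destruct (core _ _ _ _ _ _ _ _ _ _ _ _ HP HC x0 eta Heta) as [th [Hth Hcore]].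
  exists th. split; auto.
  intros H Y HY u Hnd x Hx.
  set (u0 := rep u).
  pose proof (transport eta H Y u0 HY) as HY'.
  assert (exists y1 y2, Y y1 /\ Y y2 /\ d (translated_map inv act rep piA u y1) (translated_map inv act rep piA u y2) > th)
    as [y1 [y2 [Y1 [Y2 Hd]]]].
  { apply NNPP. intro Hno. apply Hnd. intros z1 z2 [y1 [Y1 ->]] [y2 [Y2 ->]].
    apply Rnot_gt_le. intro Hg. apply Hno. exists y1, y2. auto. }
  unfold translated_map in Hd. fold u0 in Hd. rewrite (act_iso _ _ _ _ _ _ _ _ HP) in Hd.
  assert (Hx0 : translate act u0 A x) by (apply (proj1 HR u), Hx).
  destruct Hx0 as [a [Ha ->]].
  assert (Hn := Hcore _ _ HY' (act (inv u0) y1) (act (inv u0) y2)).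
  simpl in Hn. rewrite !(act_inv_r _ _ _ _ _ _ _ _ HP) in Hn.
  specialize (Hn Y1 Y2 Hd a Ha).
  intros eps Heps. destruct (Hn eps Heps) as [y' [Yy' Dy']].
  exists (act u0 y'). split; auto. rewrite (act_iso _ _ _ _ _ _ _ _ HP). exact Dy'.
Qed.

End Main.

Theorem mainTheorem14
  (G X : Type) (mul : G -> G -> G) (inv : G -> G) (one : G)
  (act : G -> X -> X) (d : X -> X -> R) (Gam : R -> R -> (R -> X) -> Prop)
  (mu nu delta : R) (g : G) (A : X -> Prop) (piA : X -> X) (rep : G -> G) :
  is_path_system_group mul inv one act d Gam mu nu ->
  is_constricting_element mul inv one act d Gam g A piA delta ->
  is_coset_rep act A rep ->
  forall eta : R, 0 <= eta ->
  exists theta : R, 1 <= theta /\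
    forall (H : G -> Prop) (Y : X -> Prop),
      is_qc_subgroup mul inv one act d Gam H Y eta ->
      (forall u : G,
         ~ diam_le d (image (translated_map inv act rep piA u) Y) theta ->
         forall x, translate act u A x -> nbhd d Y theta x) /\
      (forall K : G -> Prop,
         is_subgroup mul inv one K -> (forall h, H h -> K h) ->
         index_gt mul inv one K H theta ->
         exists k, K k /\ diam_le d (image (translated_map inv act rep piA k) Y) theta).
Proof.
  intros HP HC HR eta Heta.
  destruct (classic (inhabited X)) as [[x0]|NX].
  2:{ exists 1. split; [lra|]. intros H Y HY. split.
      - intros u _ x _. exfalso; apply NX; constructor; exact x.
      - intros K HK _ _. exists one. split. apply HK. intros x y _ _. exfalso; apply NX; constructor; exact x. }
  pose proof (Hgrp _ _ _ _ _ _ _ _ HP) as HG.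
  destruct (partI _ _ _ _ _ _ _ _ _ _ _ _ _ HP HC HR x0 eta Heta) as [th1 [Hth1 HI]].
  set (astar := piA x0).
  assert (Hastar : A astar) by (apply (pi_A _ _ _ _ _ _ _ _ _ _ HC)).
  destruct (proper _ _ _ _ _ _ _ _ HP astar (2 * th1 + 2 + eta)) as [F HF].
  set (th := Rmax th1 (INR (length F))).
  assert (Hth : th1 <= th) by apply Rmax_l.
  exists th. split. lra.
  intros H Y HY.
  assert (Hnd : forall u, ~ diam_le d (image (translated_map inv act rep piA u) Y) th ->
                 ~ diam_le d (image (translated_map inv act rep piA u) Y) th1).
  { intros u Hn Hdl. apply Hn. intros z1 z2 h1 h2. specialize (Hdl z1 z2 h1 h2). lra. }
  split.
  { intros u Hn x Hx. pose proof (HI H Y HY u (Hnd u Hn) x Hx) as N1.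
    intros eps Heps. destruct (N1 eps Heps) as [y [Yy Dy]]. exists y. split; auto. lra. }
  intros K HK HHK [l [Hlen [HlK Hdist]]].
  apply NNPP. intro Hno.
  assert (Hall : forall k, K k -> forall x, translate act k A x -> nbhd d Y th1 x).
  { intros k Kk. apply (HI H Y HY k). apply Hnd. intro Hdl. apply Hno. exists k. auto. }
  pose proof HK as [K1 [KM KI]].
  pose proof HY as [_ [Hinvar [_ Hcob]]].
  assert (Ta : translate act one A astar).
  { exists astar. split; auto. symmetry. apply (act_one _ _ _ _ _ _ _ _ HP). }
  destruct (Hall one K1 astar Ta 1 ltac:(lra)) as [ys [Yys Dys]].
  set (P := fun i f => exists h, H h /\ f = mul h (inv (nth i l one)) /\ In f F).
  assert (HE : forall i, (i < length l)%nat -> exists f, P i f).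
  { intros i Hi. set (ki := nth i l one).
    assert (Kki : K ki) by (apply HlK, nth_In, Hi).
    assert (Tx : translate act (inv ki) A (act (inv ki) astar)) by (exists astar; auto).
    destruct (Hall (inv ki) (KI _ Kki) _ Tx 1 ltac:(lra)) as [yi [Yyi Dyi]].
    destruct (Hcob ys yi Yys Yyi) as [h [Hh Dh]].
    exists (mul h (inv ki)). exists h. split; auto. split; auto. apply HF.
    rewrite (act_mul _ _ _ _ _ _ _ _ HP).
    pose proof (d_tri _ _ _ _ _ _ _ _ HP astar ys (act h (act (inv ki) astar))) as T1.
    pose proof (d_tri _ _ _ _ _ _ _ _ HP ys (act h yi) (act h (act (inv ki) astar))) as T2.
    rewrite (act_iso _ _ _ _ _ _ _ _ HP) in T2.
    pose proof (d_sym _ _ _ _ _ _ _ _ HP yi (act (inv ki) astar)). lra. }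
  set (phi := fun i => epsilon (inhabits one) (P i)).
  assert (Hphi : forall i, (i < length l)%nat -> P i (phi i)) by (intros i Hi; apply epsilon_spec, HE, Hi).
  destruct (pigeon phi (length l) F) as [i [j [Hij Eij]]].
  { intros i Hi. destruct (Hphi i Hi) as [h [_ [_ HIn]]]. exact HIn. }
  { apply INR_lt. pose proof (Rmax_r th1 (INR (length F))). fold th in H0. lra. }
  destruct (Hphi i ltac:(lia)) as [hi [Hhi [Ei _]]].
  destruct (Hphi j ltac:(lia)) as [hj [Hhj [Ej _]]].
  apply (Hdist i j Hij).
  set (ki := nth i l one) in *. set (kj := nth j l one) in *.
  assert (E : mul (inv ki) kj = mul (inv hi) hj).
  { apply (g_cancel_l _ _ _ HG hi).
    rewrite (g_assoc _ _ _ HG), <- Ei, Eij, Ej, <- (g_assoc _ _ _ HG), (g_Vl _ _ _ HG), (g_1r _ _ _ HG).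
    rewrite (g_assoc _ _ _ HG), (g_Vr _ _ _ HG), (g_1l _ _ _ HG). reflexivity. }
  rewrite E. destruct HY as [[_ [HM' HI']] _]. apply HM'; auto.
Qed.
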